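(* Let $\mathbb R^n$ and $\mathbb R_+=[0,\infty)$ carry the bounded coarse structures of their Euclidean metrics and let $\mathbb R^n\times\mathbb R_+$ carry the product coarse structure. Then the inclusion $i\colon\mathbb R_+\to\mathbb R^n\times\mathbb R_+$, $i(s)=(0,s)$, is a coarse homotopy-equivalence.
   Context: The bounded coarse structure on a metric space has as entourages the subsets of the sets $D_R=\{(x,y):d(x,y)<R\}$. The product coarse structure on $X\times Y$ has as entourages the subsets of finite unions of finite compositions of sets $M\times N$ with $M$, $N$ entourages of $X$, $Y$ (composition $M_1M_2=\{(x,z):\exists y,(x,y)\in M_1,(y,z)\in M_2\}$). In a coarse space, $M(x)=\{y:(y,x)\in M\}$ and a bounded set is one contained in some $M(x)$; a coarse map carries entourages into entourages and has bounded preimages of bounded sets. A generalised ray is $[0,\infty)$ with a unital coarse structure (diagonal contained in an entourage) such that entourages are open and bounded sets have compact closure. A coarse homotopy is a map $F\colon X\times R\to Y$ with $R$ a generalised ray such that $(x,t)\mapsto(F(x,t),t)$ is a coarse map $X\times R\to Y\times R$; for every bounded $B\subseteq X$ there is $T\in R$ such that for $x\in B$, $t\mapsto F(x,t)$ is constant for $t\ge T$; and $x\mapsto\lim_{t\to\infty}F(x,t)$ is coarse. Two coarse maps are coarsely homotopic if joined by a finite chain of pairs $F(-,0),F(-,\infty)$; a coarse map $f\colon X\to Y$ is a coarse homotopy-equivalence if there is a coarse $g\colon Y\to X$ with $g\circ f$ and $f\circ g$ coarsely homotopic to the identities. *)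

(* Defs.v *)
From HB Require Import structures.
From mathcomp Require Import all_boot all_order all_algebra.
From mathcomp Require Import all_classical all_reals all_analysis.
From Stdlib Require Import Relation_Operators.
Set Implicit Arguments.
Unset Strict Implicit.
Unset Printing Implicit Defensive.
Import Order.TTheory GRing.Theory Num.Theory.
Import numFieldTopology.Exports.
Local Open Scope classical_set_scope.
Local Open Scope ring_scope.

Definition coarse_str (X : Type) := set (set (X * X)).

Definition ecomp {X : Type} (M1 M2 : set (X * X)) : set (X * X) :=
  [set p | exists y, M1 (p.1, y) /\ M2 (y, p.2)].

Definition einv {X : Type} (M : set (X * X)) : set (X * X) :=
  [set p | M (p.2, p.1)].

Definition ediag (X : Type) : set (X * X) := [set p | p.1 = p.2].

(* compn F n = F 0 F 1 ... F n  (a composition of n.+1 sets) *)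
Fixpoint compn {X : Type} (F : nat -> set (X * X)) (n : nat) : set (X * X) :=
  match n with
  | 0%N => F 0%N
  | k.+1 => ecomp (compn F k) (F k.+1)
  end.

Definition eprod {X Y : Type} (M : set (X * X)) (N : set (Y * Y))
  : set ((X * Y) * (X * Y)) :=
  [set p | M (p.1.1, p.2.1) /\ N (p.1.2, p.2.2)].

Definition metric_coarse {R : realType} {X : Type} (d : X -> X -> R)
  : coarse_str X :=
  [set E | exists r : R, E `<=` [set p | d p.1 p.2 < r]].

(* product coarse structure: subsets of finite unions of finite
   compositions of sets M x N, M, N entourages *)
Definition prod_coarse {X Y : Type} (CX : coarse_str X) (CY : coarse_str Y)
  : coarse_str (X * Y) :=
  [set E | exists (k : nat) (m : nat -> nat)
              (M : nat -> nat -> set (X * X)) (N : nat -> nat -> set (Y * Y)),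
     (forall i j, (i < k)%N -> (j <= m i)%N -> CX (M i j) /\ CY (N i j)) /\
     E `<=` [set p | exists2 i, (i < k)%N &
                        compn (fun j => eprod (M i j) (N i j)) (m i) p]].

Definition esec {X : Type} (M : set (X * X)) (x : X) : set X :=
  [set y | M (y, x)].

Definition cbounded {X : Type} (CX : coarse_str X) (B : set X) : Prop :=
  exists M x, CX M /\ B `<=` esec M x.

Definition coarse_map {X Y : Type} (CX : coarse_str X) (CY : coarse_str Y)
  (f : X -> Y) : Prop :=
  (forall E, CX E -> CY ((fun p => (f p.1, f p.2)) @` E)) /\
  (forall B, cbounded CY B -> cbounded CX (f @^-1` B)).

(* axioms of a coarse structure (not necessarily unital) *)
Definition is_coarse_structure {X : Type} (C : coarse_str X) : Prop :=
  [/\ (forall E F, C E -> F `<=` E -> C F),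
      (forall E F, C E -> C F -> C (E `|` F)),
      (forall E, C E -> C (einv E)) &
      (forall E F, C E -> C F -> C (ecomp E F))].

Definition unital {X : Type} (C : coarse_str X) : Prop :=
  exists2 E, C E & @ediag X `<=` E.

Notation Rplus R := (set_type [set x : R | 0 <= x]).

Lemma Rplus0_subproof (R : realType) : (0 : R) \in [set x : R | 0 <= x].
Proof. by rewrite inE /=. Qed.

Definition rp0 (R : realType) : Rplus R := exist _ 0 (Rplus0_subproof R).

Definition generalised_ray {R : realType} (C : coarse_str (Rplus R)) : Prop :=
  [/\ is_coarse_structure C, unital C,
      (forall E, C E -> exists U, [/\ C U, open U & E `<=` U]) &
      (forall B, cbounded C B -> compact (closure B))].

(* coarse homotopy F : X x R -> Y from f0 = F(-,0) to finf = F(-,oo) *)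
Definition coarse_homotopy {R : realType} {X Y : Type}
  (CX : coarse_str X) (CY : coarse_str Y) (CR : coarse_str (Rplus R))
  (F : X * Rplus R -> Y) (f0 finf : X -> Y) : Prop :=
  generalised_ray CR /\
  [/\ coarse_map (prod_coarse CX CR) (prod_coarse CY CR)
                 (fun p => (F p, p.2)),
      (forall B, cbounded CX B -> exists T : Rplus R,
          forall x t, B x -> val T <= val t -> F (x, t) = F (x, T)),
      (forall x, F (x, rp0 R) = f0 x),
      (forall x, exists T : Rplus R, forall t, val T <= val t -> F (x, t) = finf x) &
      coarse_map CX CY finf].

Definition homotopy_step (R : realType) {X Y : Type}
  (CX : coarse_str X) (CY : coarse_str Y) (f g : X -> Y) : Prop :=
  exists (CR : coarse_str (Rplus R)) (F : X * Rplus R -> Y),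
    coarse_homotopy CX CY CR F f g.

Definition coarsely_homotopic (R : realType) {X Y : Type}
  (CX : coarse_str X) (CY : coarse_str Y) (f g : X -> Y) : Prop :=
  clos_refl_sym_trans (X -> Y) (homotopy_step R CX CY) f g.

Definition coarse_homotopy_equivalence (R : realType) {X Y : Type}
  (CX : coarse_str X) (CY : coarse_str Y) (f : X -> Y) : Prop :=
  coarse_map CX CY f /\
  exists g : Y -> X, [/\ coarse_map CY CX g,
     coarsely_homotopic R CX CX (g \o f) id &
     coarsely_homotopic R CY CY (f \o g) id].

Definition euclid_dist {R : realType} (n : nat) (x y : 'rV[R]_n) : R :=
  Num.sqrt (\sum_(i < n) (x ord0 i - y ord0 i) ^+ 2).

Definition Rn_coarse (R : realType) (n : nat) : coarse_str 'rV[R]_n :=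
  metric_coarse (@euclid_dist R n).

Definition Rplus_coarse (R : realType) : coarse_str (Rplus R) :=
  metric_coarse (fun s t : Rplus R => `|val s - val t| : R).

Definition incl_ray (R : realType) (n : nat) (s : Rplus R) : 'rV[R]_n * Rplus R :=
  (0, s).

(* Main.v *)
Require Import Defs.
From mathcomp Require Import all_boot all_order all_algebra all_classical all_reals all_analysis.
From mathcomp Require Import Rstruct Rstruct_topology lra.
From Stdlib Require Import Relation_Operators.
Import Order.TTheory GRing.Theory Num.Theory numFieldTopology.Exports.
Local Open Scope classical_set_scope.
Local Open Scope ring_scope.

Section Metric.
Variable R : realType.

Definition mlike {T : Type} (C : coarse_str T) (d : T -> T -> R) :=
  forall E, C E <-> exists r, E `<=` [set p | d p.1 p.2 < r].

Definition qtri {T : Type} (d : T -> T -> R) :=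
  forall r1 r2, exists r3, forall x y z, d x y < r1 -> d y z < r2 -> d x z < r3.

Lemma compn_bound {T : Type} (d : T -> T -> R) : qtri d ->
  forall (F : nat -> set (T * T)) m,
  (forall j, (j <= m)%N -> exists r, F j `<=` [set p | d p.1 p.2 < r]) ->
  exists r, compn F m `<=` [set p | d p.1 p.2 < r].
Proof.
move=> hq F; elim=> [|m IH] hF /=; first exact: hF.
have [r1 h1] := IH (fun j hj => hF j (leqW hj)).
have [r2 h2] := hF m.+1 (leqnn _).
have [r3 h3] := hq r1 r2.
exists r3 => p [y [/h1 /= a /h2 /= b]]; exact: h3 a b.
Qed.

Lemma fin_bound {T : Type} (d : T -> T -> R) (P : nat -> set (T * T)) k :
  (forall i, (i < k)%N -> exists r, P i `<=` [set p | d p.1 p.2 < r]) ->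
  exists r, forall i, (i < k)%N -> P i `<=` [set p | d p.1 p.2 < r].
Proof.
elim: k => [|k IH] h; first by exists 0.
have [r1 h1] := IH (fun i hi => h i (ltnW hi)).
have [r2 h2] := h k (ltnSn _).
exists (Num.max r1 r2) => i; rewrite ltnS leq_eqVlt => /orP [/eqP ->|hi] p /=.
  by move=> /h2 /= q; rewrite lt_max q orbT.
by move=> /(h1 _ hi) /= q; rewrite lt_max q.
Qed.

Definition dprod {X Y : Type} (dX : X -> X -> R) (dY : Y -> Y -> R)
  (p q : X * Y) : R := Num.max (dX p.1 q.1) (dY p.2 q.2).

Lemma qtri_prod {X Y : Type} (dX : X -> X -> R) (dY : Y -> Y -> R) :
  qtri dX -> qtri dY -> qtri (dprod dX dY).
Proof.
move=> hX hY r1 r2; have [a ha] := hX r1 r2; have [b hb] := hY r1 r2.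
exists (Num.max a b) => x y z; rewrite /dprod !gt_max => /andP[x1 x2] /andP[y1 y2].
by rewrite !lt_max (ha _ _ _ x1 y1) (hb _ _ _ x2 y2) orbT.
Qed.

Lemma mlike_prod {X Y : Type} (CX : coarse_str X) (CY : coarse_str Y)
  (dX : X -> X -> R) (dY : Y -> Y -> R) :
  mlike CX dX -> mlike CY dY -> qtri dX -> qtri dY ->
  mlike (prod_coarse CX CY) (dprod dX dY).
Proof.
move=> hX hY qX qY E; split.
  move=> [k [m [M [N [hMN EU]]]]].
  have [r hr] : exists r, forall i, (i < k)%N ->
     compn (fun j => eprod (M i j) (N i j)) (m i) `<=` [set p | dprod dX dY p.1 p.2 < r].
    apply: fin_bound => i ik; apply: compn_bound; first exact: qtri_prod.
    move=> j jm; have [/hX [a ha] /hY [b hb]] := hMN i j ik jm.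
    exists (Num.max a b) => p [/ha /= p1 /hb /= p2].
    by rewrite /dprod gt_max !lt_max p1 p2 !orbT.
  by exists r => p /EU [i ik hi]; exact: hr ik _ hi.
move=> [r hr]; exists 1%N, (fun _ => 0%N),
  (fun _ _ => [set p | dX p.1 p.2 < r]), (fun _ _ => [set p | dY p.1 p.2 < r]).
split.
  move=> i j _ _; split; [apply/hX | apply/hY]; by exists r.
by move=> p /hr; rewrite /= /dprod gt_max => /andP [a b]; exists 0%N.
Qed.

Lemma bounded_mlike {T : Type} (C : coarse_str T) (d : T -> T -> R) B :
  mlike C d -> cbounded C B <-> exists c r, B `<=` [set y | d y c < r].
Proof.
move=> hC; split.
  by move=> [M [x [/hC [r hr] BM]]]; exists x, r => y /BM /hr.
move=> [c [r hB]]; exists [set p | d p.1 p.2 < r], c; split => //.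
by apply/hC; exists r.
Qed.

Lemma coarse_mlike {X Y : Type} (CX : coarse_str X) (CY : coarse_str Y)
  (dX : X -> X -> R) (dY : Y -> Y -> R) (f : X -> Y) :
  mlike CX dX -> mlike CY dY ->
  (forall r, exists r', forall x y, dX x y < r -> dY (f x) (f y) < r') ->
  (forall c r, exists c' r', forall x, dY (f x) c < r -> dX x c' < r') ->
  coarse_map CX CY f.
Proof.
move=> hX hY h1 h2; split.
  move=> E /hX [r hr]; apply/hY; have [r' hr'] := h1 r.
  by exists r' => _ [p /hr /= Ep <-] /=; exact: hr'.
move=> B /(@bounded_mlike _ _ _ B hY) [c [r hB]]; apply/(@bounded_mlike _ _ _ _ hX).
have [c' [r' h]] := h2 c r; exists c', r' => x /hB /h; exact.
Qed.

Lemma coarse_comp {X Y Z : Type} (CX : coarse_str X) (CY : coarse_str Y)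
  (CZ : coarse_str Z) (f : X -> Y) (g : Y -> Z) :
  coarse_map CX CY f -> coarse_map CY CZ g -> coarse_map CX CZ (g \o f).
Proof.
move=> [f1 f2] [g1 g2]; split.
  move=> E /f1 /g1; rewrite image_comp; exact.
by move=> B /g2 /f2.
Qed.

Lemma dprod_lt {X Y : Type} (dX : X -> X -> R) (dY : Y -> Y -> R) p q r :
  (dprod dX dY p q < r) <-> (dX p.1 q.1 < r /\ dY p.2 q.2 < r).
Proof. by rewrite /dprod gt_max; split => [/andP|[-> ->]]. Qed.

End Metric.
Section Euclid.
Variable R : realType.
Variable n : nat.
Implicit Types x y z : 'rV[R]_n.

Lemma sum_le_const (F : 'I_n -> R) c : (forall i, F i <= c) ->
  \sum_(i < n) F i <= n%:R * c.
Proof.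
move=> h; apply: le_trans (ler_sum _ (fun i _ => h i)) _.
by rewrite sumr_const card_ord mulr_natl.
Qed.

Lemma euclid_ge0 x y : 0 <= euclid_dist x y.
Proof. exact: sqrtr_ge0. Qed.

Lemma euclid_coord x y i : `|x ord0 i - y ord0 i| <= euclid_dist x y.
Proof.
rewrite /euclid_dist -sqrtr_sqr ler_sqrt; last by apply: sumr_ge0 => j _; exact: sqr_ge0.
rewrite (bigD1 i) //= lerDl; apply: sumr_ge0 => j _; exact: sqr_ge0.
Qed.

Lemma euclid_le x y a : 0 <= a -> (forall i, `|x ord0 i - y ord0 i| <= a) ->
  euclid_dist x y <= (n%:R + 1) * a.
Proof.
move=> a0 h.
have n0 : (0 : R) <= n%:R by exact: ler0n.
rewrite /euclid_dist -[X in _ <= X]ger0_norm; last by apply: mulr_ge0 => //; lra.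
rewrite -sqrtr_sqr ler_sqrt; last exact: sqr_ge0.
have hs : \sum_(i < n) (x ord0 i - y ord0 i) ^+ 2 <= n%:R * a ^+ 2.
  apply: sum_le_const => i; have := h i; rewrite ler_norml => /andP [h1 h2].
  nra.
apply: le_trans hs _; nra.
Qed.

Lemma qtri_euclid : @qtri R _ (@euclid_dist R n).
Proof.
move=> r1 r2; exists ((n%:R + 1) * (r1 + r2) + 1) => x y z h1 h2.
have n0 : (0 : R) <= n%:R by exact: ler0n.
have e1 := euclid_ge0 x y; have e2 := euclid_ge0 y z.
have H : euclid_dist x z <= (n%:R + 1) * (euclid_dist x y + euclid_dist y z).
  apply: euclid_le; first lra.
  move=> i; apply: le_trans (ler_distD (y ord0 i) _ _) _.
  by apply: lerD; exact: euclid_coord.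
nra.
Qed.
End Euclid.

Section Real.
Variable R : realType.
Implicit Types a b t u : R.

Definition sft a t := Num.max (a - t) (Num.min (a + t) 0).

Lemma sft_rel a t : 0 <= t ->
  (sft a t = a - t /\ t <= a) \/ (sft a t = a + t /\ a <= - t) \/
  (sft a t = 0 /\ - t <= a /\ a <= t).
Proof.
move=> t0; rewrite /sft; case: (leP (a + t) 0) => h1.
  case: (leP (a - t) (a + t)) => h2.
  - right; left; split => //; lra.
  - left; split => //; lra.
case: (leP (a - t) 0) => h2.
- right; right; split => //; lra.
- left; split => //; lra.
Qed.

Lemma sft_lip a b t u : 0 <= t -> 0 <= u ->
  `|sft a t - sft b u| <= `|a - b| + `|t - u|.
Proof.
move=> t0 u0.
have h1 := ler_norm (a - b); have h2 : b - a <= `|a - b| by rewrite distrC ler_norm.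
have h3 := ler_norm (t - u); have h4 : u - t <= `|t - u| by rewrite distrC ler_norm.
rewrite ler_norml.
have [[-> ?]|[[-> ?]|[-> [? ?]]]] := sft_rel a t t0;
have [[-> ?]|[[-> ?]|[-> [? ?]]]] := sft_rel b u u0; apply/andP; split; lra.
Qed.

Lemma sft_bound a t : 0 <= t -> `|a| <= `|sft a t| + t.
Proof.
move=> t0; have h1 := ler_norm (sft a t).
have h2 : - sft a t <= `|sft a t| by rewrite -normrN ler_norm.
rewrite ler_norml.
have [[e ?]|[[e ?]|[e [? ?]]]] := sft_rel a t t0; rewrite e in h1 h2 *;
apply/andP; split; lra.
Qed.

Lemma sft0 a : sft a 0 = a.
Proof.
have [[-> ?]|[[-> ?]|[-> [? ?]]]] := sft_rel a 0 (lexx (0:R)); lra.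
Qed.

Lemma sft_big a t : `|a| <= t -> sft a t = 0.
Proof.
move=> h; have t0 : 0 <= t by exact: le_trans (normr_ge0 a) h.
have h1 := ler_norm a; have h2 : - a <= `|a| by rewrite -normrN ler_norm.
have [[-> ?]|[[-> ?]|[-> [? ?]]]] := sft_rel a t t0; lra.
Qed.

Lemma mina_lip a b t u :
  `|Num.min `|a| t - Num.min `|b| u| <= `|a - b| + `|t - u|.
Proof.
have h0 := ler_dist_dist a b.
have h1 : `|a| - `|b| <= `|a - b|.
  exact: le_trans (ler_norm _) h0.
have h2 : `|b| - `|a| <= `|a - b|.
  by have := ler_norm (`|b| - `|a|); rewrite (distrC `|b|); lra.
have h3 := ler_norm (t - u); have h4 : u - t <= `|t - u| by rewrite distrC ler_norm.
rewrite ler_norml; case: (leP `|a| t) => ?; case: (leP `|b| u) => ?;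
apply/andP; split; lra.
Qed.
End Real.

Section Ray.
Variable R : realType.

Lemma val_ge0 (s : Rplus R) : 0 <= val s.
Proof. by have := valP s; rewrite inE. Qed.

Lemma rp_subproof (v : R) : Num.max v 0 \in [set x : R | 0 <= x].
Proof. by rewrite inE /= le_max lexx orbT. Qed.
Definition rp (v : R) : Rplus R := exist _ (Num.max v 0) (rp_subproof v).

Lemma val_rp (v : R) : 0 <= v -> val (rp v) = v.
Proof. by move=> h; rewrite /= max_l. Qed.
Lemma val_rp_ge (v : R) : v <= val (rp v).
Proof. by rewrite /= le_max lexx. Qed.
Lemma rp_val (s : Rplus R) : rp (val s) = s.
Proof. by apply: val_inj; rewrite val_rp // val_ge0. Qed.

Lemma val_cont : forall x : Rplus R, (fun s : Rplus R => val s) @ x --> val x.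
Proof. exact: initial_continuous. Qed.

Lemma rp_cont : continuous rp.
Proof.
apply: (@continuous_comp_initial _ _ _ set_val).
move=> x; apply: (@continuous_max R R id (fun=> 0) x) => //.
exact: cvg_cst.
Qed.

Lemma h_cont : continuous (fun p : Rplus R * Rplus R => `|val p.1 - val p.2|).
Proof.
move=> x.
apply: (@continuous_comp _ _ _ (fun p : Rplus R * Rplus R => val p.1 - val p.2) Num.norm).
  apply: continuousB.
  apply: (@continuous_comp _ _ _ fst (fun s : Rplus R => val s)).
  exact: cvg_fst. exact: val_cont.
  apply: (@continuous_comp _ _ _ snd (fun s : Rplus R => val s)).
  exact: cvg_snd. exact: val_cont.
exact: norm_continuous.
Qed.

Lemma ray_ok : generalised_ray (@Rplus_coarse R).
Proof.
split.
- split.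
  + by move=> E F [r Er] FE; exists r => p /FE /Er.
  + move=> E F [r1 E1] [r2 E2]; exists (Num.max r1 r2) => p [/E1|/E2] /= h;
    rewrite lt_max h ?orbT //.
  + by move=> E [r Er]; exists r => p /Er /=; rewrite distrC.
  + move=> E F [r1 E1] [r2 E2]; exists (r1 + r2) => p [y [/E1 /= h1 /E2 /= h2]].
    apply: le_lt_trans (ler_distD (val y) _ _) _; exact: ltrD.
- exists [set p : Rplus R * Rplus R | `|val p.1 - val p.2| < 1].
    by exists 1.
  by move=> p /= ->; rewrite subrr normr0.
- move=> E [r Er]; exists [set p : Rplus R * Rplus R | `|val p.1 - val p.2| < r].
  split => //; first by exists r.
  apply: (@open_comp _ _ (fun p : Rplus R * Rplus R => `|val p.1 - val p.2|) [set y : R | y < r]).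
    by move=> x _; apply: h_cont.
  exact: open_lt.
- move=> B [M [x [[r Mr] BM]]].
  pose K := [set y : Rplus R | val y <= val x + r].
  have BK : B `<=` K.
    move=> y /BM /Mr /= h; rewrite /K /=.
    have := ler_norm (sval y - sval x); lra.
  have Kc : closed K.
    apply: (@preimage_closed _ _ (fun s : Rplus R => val s) [set y : R | y <= val x + r]).
      by move=> y _; apply: val_cont.
    exact: closed_le.
  apply: (@subclosed_compact _ _ (rp @` `[0, val x + r])).
  + exact: closed_closure.
  + apply: continuous_compact; last exact: segment_compact.
    apply: continuous_subspaceT; exact: rp_cont.
  + move=> y /(closureS BK); rewrite -(closure_id K).1 // => Ky.
    exists (val y); last exact: rp_val.
    by rewrite /= in_itv /= val_ge0.
Qed.
End Ray.

Section Main.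
Variable R : realType.
Variable n : nat.
Local Notation Y := ('rV[R]_n * Rplus R)%type.
Implicit Types x y : 'rV[R]_n.

Definition dRp (s t : Rplus R) : R := `|val s - val t|.
Definition dY : Y -> Y -> R := @dprod R _ _ (@euclid_dist R n) dRp.
Definition dZ : Y * Rplus R -> Y * Rplus R -> R := @dprod R _ _ dY dRp.

Lemma mlike_Rn : @mlike R _ (@Rn_coarse R n) (@euclid_dist R n).
Proof. by move=> E; split. Qed.
Lemma mlike_Rp : @mlike R _ (@Rplus_coarse R) dRp.
Proof. by move=> E; split. Qed.
Lemma qtri_Rp : @qtri R _ dRp.
Proof.
move=> r1 r2; exists (r1 + r2) => x y z h1 h2.
apply: le_lt_trans (ler_distD (val y) _ _) _; exact: ltrD.
Qed.
Lemma mlike_Y : @mlike R _ (prod_coarse (@Rn_coarse R n) (@Rplus_coarse R)) dY.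
Proof. apply: mlike_prod; [exact: mlike_Rn|exact: mlike_Rp|exact: qtri_euclid|exact: qtri_Rp]. Qed.
Lemma qtri_Y : @qtri R _ dY.
Proof. apply: qtri_prod; [exact: qtri_euclid|exact: qtri_Rp]. Qed.
Lemma mlike_Z : @mlike R _ (prod_coarse (prod_coarse (@Rn_coarse R n) (@Rplus_coarse R))
   (@Rplus_coarse R)) dZ.
Proof. apply: mlike_prod; [exact: mlike_Y|exact: mlike_Rp|exact: qtri_Y|exact: qtri_Rp]. Qed.

Lemma zero_coord i : (0 : 'rV[R]_n) ord0 i = 0.
Proof. by rewrite mxE. Qed.

Lemma n_ge0 : (0 : R) <= n%:R.
Proof. exact: ler0n. Qed.

Definition N1 (x : 'rV[R]_n) : R := \sum_(i < n) `|x ord0 i|.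

Lemma N1_ge0 x : 0 <= N1 x.
Proof. by apply: sumr_ge0 => i _. Qed.

Lemma N1_coord x i : `|x ord0 i| <= N1 x.
Proof. by rewrite /N1 (bigD1 i) //= lerDl; apply: sumr_ge0. Qed.

Lemma N1_0 : N1 0 = 0.
Proof. by rewrite /N1 big1 // => i _; rewrite zero_coord normr0. Qed.

Lemma N1_lip x y : `|N1 x - N1 y| <= n%:R * euclid_dist x y.
Proof.
rewrite /N1 -sumrB; apply: le_trans (ler_norm_sum _ _ _) _.
apply: sum_le_const => i; apply: le_trans (ler_dist_dist _ _) _.
exact: euclid_coord.
Qed.

Lemma euclid00 : euclid_dist (0 : 'rV[R]_n) 0 = 0.
Proof.
apply/eqP; rewrite eq_le euclid_ge0 andbT.
have := @euclid_le R n 0 0 0 (lexx _); rewrite mulr0; apply => i.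
by rewrite zero_coord subrr normr0.
Qed.

Lemma coord_le_euclid0 (x : 'rV[R]_n) i : `|x ord0 i| <= euclid_dist x 0.
Proof. by have := @euclid_coord R n x 0 i; rewrite zero_coord subr0. Qed.

Lemma euclid0_le (x : 'rV[R]_n) a : 0 <= a -> (forall i, `|x ord0 i| <= a) ->
  euclid_dist x 0 <= (n%:R + 1) * a.
Proof. by move=> a0 h; apply: (@euclid_le R n) => // i; rewrite zero_coord subr0. Qed.

Definition fI : Rplus R -> Y := @incl_ray R n.
Definition gP (p : Y) : Rplus R := @rp R (val p.2 + N1 p.1).

Lemma val_gP p : val (gP p) = val p.2 + N1 p.1.
Proof. by rewrite val_rp // addr_ge0 ?val_ge0 ?N1_ge0. Qed.

Lemma fI_coarse : coarse_map (@Rplus_coarse R)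
   (prod_coarse (@Rn_coarse R n) (@Rplus_coarse R)) fI.
Proof.
apply: (@coarse_mlike R _ _ _ _ _ _ _ mlike_Rp mlike_Y).
  move=> r; exists r => x y h; apply/dprod_lt; split => //=.
  rewrite euclid00; apply: le_lt_trans h; exact: normr_ge0.
move=> c r; exists c.2, r => x /dprod_lt [_ h]; exact: h.
Qed.

Lemma gP_coarse : coarse_map (prod_coarse (@Rn_coarse R n) (@Rplus_coarse R))
   (@Rplus_coarse R) gP.
Proof.
have n0 := n_ge0.
apply: (@coarse_mlike R _ _ _ _ _ _ _ mlike_Y mlike_Rp).
  move=> r; exists (r + n%:R * r) => p q /dprod_lt [h1 h2].
  rewrite /dRp !val_gP.
  have h3 := N1_lip p.1 q.1.
  have h4 : `|val p.2 + N1 p.1 - (val q.2 + N1 q.1)| <=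
     `|val p.2 - val q.2| + `|N1 p.1 - N1 q.1|.
    by rewrite opprD addrACA; exact: ler_normD.
  have h5 : n%:R * euclid_dist p.1 q.1 <= n%:R * r.
    by apply: ler_wpM2l => //; exact: ltW.
  rewrite /dRp in h2; lra.
move=> c r; exists (0, rp0 R), ((n%:R + 1) * (val c + r) + (val c + r) + 1).
move=> p; rewrite /dRp val_gP => h.
have hv := ler_norm (val p.2 + N1 p.1 - val c).
have s0 := @val_ge0 R p.2; have N0 := N1_ge0 p.1; have c0 := @val_ge0 R c.
have hx : euclid_dist p.1 0 <= (n%:R + 1) * (val c + r).
  apply: euclid0_le; first lra.
  move=> i; have := N1_coord p.1 i; lra.
have hr : (n%:R + 1) * (val c + r) >= 0 by apply: mulr_ge0; lra.
apply/dprod_lt; split => /=; simpl in *; first lra.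
rewrite /dRp /= subr0 ger0_norm //; lra.
Qed.

Lemma gf_id : gP \o fI = id.
Proof.
apply: funext => s; apply: val_inj; change (val (gP (fI s)) = val s).
by rewrite val_gP N1_0 addr0.
Qed.

Definition Fx x (t : R) : 'rV[R]_n := \row_i @sft R (x ord0 i) t.
Definition Fs x (t : R) : R := \sum_(i < n) Num.min `|x ord0 i| t.
Definition HF (q : Y * Rplus R) : Y :=
  (Fx q.1.1 (val q.2), @rp R (val q.1.2 + Fs q.1.1 (val q.2))).

Lemma Fx_coord x t i : (Fx x t) ord0 i = @sft R (x ord0 i) t.
Proof. by rewrite mxE. Qed.

Lemma Fx0 x : Fx x 0 = x.
Proof. by apply/rowP => i; rewrite mxE sft0. Qed.

Lemma Fx_big x t : (forall i, `|x ord0 i| <= t) -> Fx x t = 0.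
Proof. by move=> h; apply/rowP => i; rewrite !mxE sft_big. Qed.

Lemma Fs0 x : Fs x 0 = 0.
Proof. by rewrite /Fs big1 // => i _; rewrite min_r. Qed.

Lemma Fs_big x t : (forall i, `|x ord0 i| <= t) -> Fs x t = N1 x.
Proof. by move=> h; apply: eq_bigr => i _; rewrite min_l. Qed.

Lemma Fs_ge0 x t : 0 <= t -> 0 <= Fs x t.
Proof. by move=> t0; apply: sumr_ge0 => i _; rewrite le_min normr_ge0. Qed.

Lemma Fs_lip x y t u :
  `|Fs x t - Fs y u| <= n%:R * (euclid_dist x y + `|t - u|).
Proof.
rewrite /Fs -sumrB; apply: le_trans (ler_norm_sum _ _ _) _.
apply: sum_le_const => i; apply: le_trans (@mina_lip R _ _ _ _) _.
by apply: lerD => //; exact: euclid_coord.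
Qed.

Lemma HF_0 (p : Y) : HF (p, rp0 R) = p.
Proof.
case: p => x s; rewrite /HF /= Fx0 Fs0 addr0; congr (_, _); exact: rp_val.
Qed.

Lemma HF_big (p : Y) (t : Rplus R) : (forall i, `|p.1 ord0 i| <= val t) -> HF (p, t) = (fI \o gP) p.
Proof. by move=> h; rewrite /HF /= Fx_big // Fs_big. Qed.

Lemma HF_val2 x (s t : Rplus R) : val (HF ((x, s), t)).2 = val s + Fs x (val t).
Proof. by apply: val_rp; rewrite addr_ge0 ?Fs_ge0 ?val_ge0. Qed.

Lemma HF_1 x (s t : Rplus R) : (HF ((x, s), t)).1 = Fx x (val t).
Proof. by []. Qed.

Lemma hom : coarse_homotopy (prod_coarse (@Rn_coarse R n) (@Rplus_coarse R))
  (prod_coarse (@Rn_coarse R n) (@Rplus_coarse R)) (@Rplus_coarse R) HF id (fI \o gP).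
Proof.
have n0 := n_ge0.
split; first exact: ray_ok.
split.
- apply: (@coarse_mlike R _ _ _ _ _ _ _ mlike_Z mlike_Z).
  + move=> r; exists ((n%:R + 1) * (2 * r) + r + 1).
    move=> [[x s] t] [[x' s'] t'] /dprod_lt [/dprod_lt [/= he hs] ht].
    rewrite /dRp /= in hs ht.
    have e0 := @euclid_ge0 R n x x'.
    have dt0 := normr_ge0 (val t - val t').
    have E1 : euclid_dist (Fx x (val t)) (Fx x' (val t')) <=
        (n%:R + 1) * (euclid_dist x x' + `|val t - val t'|).
      apply: euclid_le; first lra.
      move=> i; rewrite !Fx_coord; apply: le_trans (@sft_lip R _ _ _ _ _ _) _;
        try exact: val_ge0.
      by apply: lerD => //; exact: euclid_coord.
    have E2 := Fs_lip x x' (val t) (val t').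
    have E3 : `|val s + Fs x (val t) - (val s' + Fs x' (val t'))| <=
       `|val s - val s'| + `|Fs x (val t) - Fs x' (val t')|.
      by rewrite opprD addrACA; exact: ler_normD.
    have P1 : (n%:R + 1) * (euclid_dist x x' + `|val t - val t'|) <= (n%:R + 1) * (2 * r).
      apply: ler_wpM2l; simpl in *; lra.
    have P2 : n%:R * (euclid_dist x x' + `|val t - val t'|) <= n%:R * (2 * r).
      apply: ler_wpM2l; simpl in *; lra.
    have P3 : n%:R * (2 * r) <= (n%:R + 1) * (2 * r) by rewrite mulrDl mul1r; simpl in *; lra.
    have P4 : 0 <= (n%:R + 1) * (2 * r) by apply: mulr_ge0; simpl in *; lra.
    apply/dprod_lt; split; first (apply/dprod_lt; split).
    * rewrite HF_1 HF_1; simpl in *; lra.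
    * rewrite /dRp !HF_val2; simpl in *; lra.
    * rewrite /dRp /=; simpl in *; lra.
  + move=> c r.
    pose A := 2 * r + euclid_dist c.1.1 0 + val c.2.
    exists ((0, rp0 R), rp0 R), ((n%:R + 1) * A + (val c.1.2 + r) + (val c.2 + r) + 1).
    move=> [[x s] t] /dprod_lt [/dprod_lt [/= h1 h2] h3].
    rewrite /dRp HF_val2 in h2; rewrite /dRp /= in h3.
    have t0 := @val_ge0 R t; have s0 := @val_ge0 R s.
    have ct0 := @val_ge0 R c.2; have cs0 := @val_ge0 R c.1.2.
    have ec0 := @euclid_ge0 R n c.1.1 0.
    have F0 := @Fs_ge0 x (val t) t0.
    have r0 : 0 <= r by apply: le_trans (ltW h3); exact: normr_ge0.
    have ht := ler_norm (val t - val c.2).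
    have hs := ler_norm (val s + Fs x (val t) - val c.1.2).
    have A0 : 0 <= A by rewrite /A; simpl in *; lra.
    have hx : euclid_dist x 0 <= (n%:R + 1) * A.
      apply: euclid0_le => // i.
      have b1 := @sft_bound R (x ord0 i) _ t0.
      have b2 := @euclid_coord R n (Fx x (val t)) c.1.1 i.
      rewrite Fx_coord in b2.
      have b3 := coord_le_euclid0 c.1.1 i.
      have b4 := ler_distD (c.1.1 ord0 i) (@sft R (x ord0 i) (val t)) 0.
      rewrite !subr0 in b4.
      rewrite /A; simpl in *; lra.
    have hA : 0 <= (n%:R + 1) * A by apply: mulr_ge0 => //; simpl in *; lra.
    apply/dprod_lt; split; first (apply/dprod_lt; split).
    * rewrite /=; simpl in *; lra.
    * rewrite /dRp /= subr0 ger0_norm //; simpl in *; lra.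
    * rewrite /dRp /= subr0 ger0_norm //; simpl in *; lra.
- move=> B /(@bounded_mlike R _ _ _ B mlike_Y) [c [r hB]].
  exists (@rp R (r + euclid_dist c.1 0)) => p t /hB /dprod_lt [h1 _] hT.
  have key : forall i, `|p.1 ord0 i| <= r + euclid_dist c.1 0.
    move=> i; have b1 := @euclid_coord R n p.1 c.1 i.
    have b2 := coord_le_euclid0 c.1 i.
    have b3 := ler_distD (c.1 ord0 i) (p.1 ord0 i) 0; rewrite !subr0 in b3.
    simpl in *; lra.
  have hT2 := @val_rp_ge R (r + euclid_dist c.1 0).
  rewrite !HF_big // => i; have := key i; simpl in *; lra.
- exact: HF_0.
- move=> p; exists (@rp R (N1 p.1)) => t ht; apply: HF_big => i.
  have := N1_coord p.1 i; have := @val_rp_ge R (N1 p.1); simpl in *; lra.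
- exact: coarse_comp gP_coarse fI_coarse.
Qed.

End Main.

Theorem mainTheorem5 (n : nat) :
  @coarse_homotopy_equivalence Rdefinitions.R _ _
    (@Rplus_coarse Rdefinitions.R)
    (prod_coarse (@Rn_coarse Rdefinitions.R n) (@Rplus_coarse Rdefinitions.R))
    (@incl_ray Rdefinitions.R n).
Proof.
split; first exact: (@fI_coarse Rdefinitions.R n).
exists (@gP Rdefinitions.R n); split.
- exact: gP_coarse.
- have -> : @gP Rdefinitions.R n \o @incl_ray Rdefinitions.R n = id
    by exact: (@gf_id Rdefinitions.R n).
  exact: rst_refl.
- apply: rst_sym; apply: rst_step.
  exists (@Rplus_coarse Rdefinitions.R), (@HF Rdefinitions.R n).
  exact: hom.
Qed.
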